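(* Let $Y_t$ be a random variable taking values in a measurement space $\mathcal Y$, with distribution $p_{y,t}$, and let $p\in(0,1)$ and $\delta\in(0,1)$. Consider the following two cases. (Categorical case) $\mathcal Y$ is a finite set of cardinality $N$. Define $\mathcal R_{t,p}:=\{y\in\mathcal Y : p_{y,t}(\{y\})\ge p\}$. ($\gamma$-quantized case) $\mathcal Y\subset\mathbb R^n$ is bounded, $\gamma>0$, and $\mathcal Y_q$ is a minimal cover of $\mathcal Y$ by closed $\ell_\infty$-balls of radius $\gamma/2$ (called bins), with $N:=|\mathcal Y_q|$ finite (the covering number). Define $\mathcal R^{\gamma}_{t,p}:=\{y : \exists\, y_{\mathrm{bin}}\in\mathcal Y_q \text{ with } y\in y_{\mathrm{bin}} \text{ and } p_{y,t}(y_{\mathrm{bin}})\ge p\}$. Let $y_1,\dots,y_m$ be $m$ i.i.d. samples drawn from the distribution of $Y_t$. If $$ m\ \ge\ \max\left(N,\ \frac{\log(\delta/N)}{\log(1-p)}\right), $$ then $\mathbb P\big(\mathcal R^{(\gamma)}_{t,p}\subset \hat{\mathcal R}_t\big)\ge 1-\delta$, where in the categorical case $\mathcal R^{(\gamma)}_{t,p}=\mathcal R_{t,p}$ and $\hat{\mathcal R}_t=\{y_i\}_{i=1}^m$, and in the $\gamma$-quantized case $\mathcal R^{(\gamma)}_{t,p}=\mathcal R^{\gamma}_{t,p}$ and $\hat{\mathcal R}_t=\bigcup_{i=1}^m \mathcal B_\infty(y_i,\gamma)$, with $\mathcal B_\infty(y_i,\gamma)$ the closed $\ell_\infty$-ball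 centered at $y_i$ of radius $\gamma$.
   Context: Setting: $Y_t=h(X_t)$ is the measurement value at time $t$ of a (possibly stochastic) discrete-time control system (''dialogue process'') in which the initial state $X_0$ is drawn from a distribution $p_0$, the inputs are drawn from input distributions, and $h$ is a deterministic readout map into $\mathcal Y$; $p_{y,t}$ denotes the resulting (pushforward) distribution of $Y_t$. The theorem only uses that $y_1,\dots,y_m$ are i.i.d. draws of $Y_t$. The set $\mathcal R^{(\gamma)}_{t,p}$ is called the $p$-approximate (respectively $(p,\gamma)$-approximate) reachable set at time $t$. *)

(* Defs.v *)
From HB Require Import structures.
From mathcomp Require Import all_boot all_order all_algebra.
From mathcomp Require Import all_classical all_reals all_analysis.
Set Implicit Arguments. Unset Strict Implicit. Unset Printing Implicit Defensive.
Import Order.TTheory GRing.Theory Num.Theory.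
Local Open Scope classical_set_scope.
Local Open Scope ring_scope.

(* Points of R^n are n-tuples of reals (with the canonical product sigma-algebra
   of mathcomp-analysis on n.-tuple R). *)

Definition linf_ball (R : realType) (n : nat) (c : n.-tuple R) (r : R)
  : set (n.-tuple R) :=
  [set x | forall i : 'I_n, `|tnth x i - tnth c i| <= r].

Definition linf_bounded (R : realType) (n : nat) (Y : set (n.-tuple R)) : Prop :=
  exists M : R, forall y, Y y -> forall i : 'I_n, `|tnth y i| <= M.

Definition linf_cover (R : realType) (n : nat) (Y : set (n.-tuple R)) (r : R)
  (k : nat) (c : 'I_k -> n.-tuple R) : Prop :=
  Y `<=` \bigcup_(j in [set: 'I_k]) linf_ball (c j) r.

Definition min_linf_cover (R : realType) (n : nat) (Y : set (n.-tuple R)) (r : R)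
  (N : nat) (c : 'I_N -> n.-tuple R) : Prop :=
  linf_cover Y r c /\
  forall (k : nat) (c' : 'I_k -> n.-tuple R), linf_cover Y r c' -> (N <= k)%N.

Definition iid_sample d dT (Omega : measurableType d) (T : measurableType dT)
  (R : realType) (P : probability Omega R) (mu : probability T R) (m : nat)
  (X : 'I_m -> Omega -> T) : Prop :=
  [/\ (forall i, measurable_fun setT (X i)),
      (forall i (A : set T), measurable A -> P (X i @^-1` A) = mu A) &
      (forall A : 'I_m -> set T, (forall i, measurable (A i)) ->
         P (\bigcap_(i in [set: 'I_m]) (X i @^-1` A i)) =
         (\prod_(i < m) P (X i @^-1` A i))%E)].

(* Main.v *)
Require Import Defs.
From HB Require Import structures.
From mathcomp Require Import all_boot all_order all_algebra.
From mathcomp Require Import all_classical all_reals all_analysis.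
From mathcomp Require Import measurable_realfun.
Set Implicit Arguments. Unset Strict Implicit. Unset Printing Implicit Defensive.
Import Order.TTheory GRing.Theory Num.Theory.
Local Open Scope classical_set_scope.
Local Open Scope ring_scope.

Lemma key (R : realType) (p delta : R) (N m : nat) :
  0 < p < 1 -> 0 < delta < 1 ->
  ln (delta / N%:R) / ln (1 - p) <= m%:R ->
  N%:R * (1 - p) ^+ m <= delta.
Proof.
move=> /andP[p0 p1] /andP[d0 d1] H.
have [->|N0] := eqVneq N 0%N; first by rewrite mul0r ltW.
have Np : 0 < N%:R :> R by rewrite ltr0n lt0n.
have q0 : 0 < 1 - p by rewrite subr_gt0.
have lq : ln (1 - p) < 0 by rewrite ln_lt0 // q0 /= ltrBlDr ltrDl.
have H2 : m%:R * ln (1 - p) <= ln (delta / N%:R).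
  by rewrite -ler_ndivrMr.
rewrite mulr_natl -lnXn // in H2.
have : (1 - p) ^+ m <= delta / N%:R.
  by rewrite -ler_ln ?posrE ?exprn_gt0 ?divr_gt0.
by rewrite ler_pdivlMr // mulrC.
Qed.

Lemma miss (R : realType) (T : finType) (q : T -> R) m (y : T) :
  \sum_(y : T) q y = 1 ->
  \sum_(s : {ffun 'I_m -> T} | y \notin [set s i | i : 'I_m]%SET) \prod_(i < m) q (s i)
  = (1 - q y) ^+ m.
Proof.
move=> q1.
pose q' j := if j == y then 0 else q j.
have e : \sum_j q' j = 1 - q y.
  rewrite -q1 [X in _ = X - _](bigD1 y) //= addrC addrK (bigD1 y) //= /q' eqxx add0r.
  by apply: eq_bigr => j /negbTE ->.
rewrite -e -[m in RHS](card_ord m) -prodr_const.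
rewrite bigA_distr_bigA /=.
rewrite big_mkcond /=; apply: eq_bigr => s _.
case: imsetP => [[i _ yi]|H] /=.
  apply/esym/eqP/prodf_eq0; exists i => //; by rewrite /q' -yi eqxx.
apply: eq_bigr => i _; rewrite /q'; case: eqP => // Hi.
by exfalso; apply: H; exists i.
Qed.

Lemma cat_case (R : realType) (p : R) (T : finType) (q : T -> R) m :
  0 <= p <= 1 ->
  (forall y, 0 <= q y) -> \sum_(y : T) q y = 1 ->
  1 - #|T|%:R * (1 - p) ^+ m <=
  \sum_(s : {ffun 'I_m -> T} |
      [set y | p <= q y]%SET \subset [set s i | i : 'I_m]%SET) \prod_(i < m) q (s i).
Proof.
move=> /andP[p0 p1] q0 q1.
set S := [set y | p <= q y]%SET.
pose F (s : {ffun 'I_m -> T}) := \prod_(i < m) q (s i).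
have F0 s : 0 <= F s by apply: prodr_ge0.
have tot : \sum_s F s = 1.
  rewrite /F -(bigA_distr_bigA (fun (i : 'I_m) (j : T) => q j)) /=.
  by rewrite q1 prodr_const expr1n.
have qle1 y : q y <= 1.
  by rewrite -q1 (bigD1 y) //= lerDl sumr_ge0.
have hb : \sum_(s : {ffun 'I_m -> T} | ~~ (S \subset [set s i | i : 'I_m]%SET)) F s <= #|T|%:R * (1 - p) ^+ m.
apply: (@le_trans _ _ (\sum_(y in S) (1 - q y) ^+ m)).
  rewrite (eq_bigr (fun y => \sum_(s : {ffun 'I_m -> T} | y \notin [set s i | i : 'I_m]%SET) F s));
    last by move=> y _; rewrite miss.
  under eq_bigr do rewrite big_mkcond.
  rewrite exchange_big /= big_mkcond /=.
  apply: ler_sum => s _.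
  case: ifPn => bad; last by apply: sumr_ge0 => z _; case: ifP.
  have [y yS yn] : exists2 y, y \in S & y \notin [set s i | i : 'I_m]%SET.
    case/subsetPn: bad => y yS yn; by exists y.
  by rewrite (bigD1 y) //= yn lerDl sumr_ge0 // => z _; case: ifP.
apply: (@le_trans _ _ (\sum_(y in S) (1 - p) ^+ m)).
  apply: ler_sum => y; rewrite inE => py.
  by apply: lerXn2r; rewrite ?nnegrE ?subr_ge0 ?lerB.
rewrite sumr_const -[X in X <= _]mulr_natl ler_wpM2r ?exprn_ge0 ?subr_ge0 // ler_nat.
exact: max_card.
move: tot hb; rewrite (bigID (fun s : {ffun 'I_m -> T} => S \subset [set s i | i : 'I_m]%SET)) /= => tot hb.
by rewrite -[X in X - _ <= _]tot -addrA gerDl subr_le0.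
Qed.

Lemma ball_meas (R : realType) n (c : n.-tuple R) r : measurable (linf_ball c r).
Proof.
have -> : linf_ball c r = \bigcap_(i in [set: 'I_n])
   ((fun x : n.-tuple R => `|tnth x i - tnth c i|) @^-1` `]-oo, r]).
  apply/seteqP; split => x /=.
    by move=> H i _; rewrite /= in_itv /= H.
  by move=> H i; have := H i I; rewrite /= in_itv.
apply: fin_bigcap_measurable; first exact: finite_finset.
move=> i _.
have mf : measurable_fun setT (fun x : n.-tuple R => `|tnth x i - tnth c i|).
  apply: measurableT_comp => //.
  apply: measurable_funB => //; exact: measurable_tnth.
by rewrite -[X in measurable X]setTI; apply: mf => //; exact: measurable_itv.
Qed.

Lemma gamma_case (R : realType) (p delta : R) (n : nat) (gamma : R)
  (N : nat) (c : 'I_N -> n.-tuple R)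
  (mu : probability (n.-tuple R) R)
  (d : measure_display) (Omega : measurableType d)
  (P : probability Omega R) (m : nat) (X : 'I_m -> Omega -> n.-tuple R) :
  0 <= p <= 1 -> 
  iid_sample P mu X ->
  N%:R * (1 - p) ^+ m <= delta ->
  let Rgp := [set y | exists j : 'I_N,
                   linf_ball (c j) (gamma / 2) y /\ (p%:E <= mu (linf_ball (c j) (gamma / 2)))%E] in
  exists E : set Omega, [/\ measurable E,
       E `<=` [set w | Rgp `<=` \bigcup_(i in [set: 'I_m]) linf_ball (X i w) gamma] &
       ((1 - delta)%:E <= P E)%E].
Proof.
move=> /andP[p0 p1] [mX lawX indX] Hd Rgp.
set B := fun j => linf_ball (c j) (gamma / 2).
have mB j : measurable (B j) by exact: ball_meas.
have mXB i (A : set (n.-tuple R)) : measurable A -> measurable (X i @^-1` A).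
  by move=> mA; rewrite -[X in measurable X]setTI; apply: mX.
set G := [set j : 'I_N | (p%:E <= mu (B j))%E].
pose E := \bigcap_(j in G) \bigcup_(i in [set: 'I_m]) (X i @^-1` B j).
have mE : measurable E.
  apply: fin_bigcap_measurable; first exact: finite_finset.
  move=> j _; apply: fin_bigcup_measurable; first exact: finite_finset.
  by move=> i _; apply: mXB.
exists E; split => //.
  move=> w Ew y [j [yB Gj]].
  have [i _ XiB] := Ew j Gj.
  exists i => // k.
  have h1 := yB k; have h2 := XiB k.
  rewrite (_ : gamma = gamma / 2 + gamma / 2); last by rewrite -splitr.
  have -> : tnth y k - tnth (X i w) k =
     (tnth y k - tnth (c j) k) - (tnth (X i w) k - tnth (c j) k).
    by rewrite opprB addrA subrK.
  exact: le_trans (ler_normB _ _) (lerD h1 h2).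
have AjP j : G j ->
    (P (\bigcap_(i in [set: 'I_m]) X i @^-1` ~` B j) <= ((1 - p) ^+ m)%:E)%E.
  move=> Gj; rewrite indX; last by move=> i; exact: measurableC.
  rewrite (eq_bigr (fun _ => 1 - mu (B j))%E); last first.
    by move=> i _; rewrite lawX ?probability_setC //; exact: measurableC.
  have finB : mu (B j) \is a fin_num by exact: fin_num_measure.
  rewrite -(fineK finB) -EFinB prodEFin lee_fin prodr_const card_ord.
  have r1 : fine (mu (B j)) <= 1.
    by rewrite -lee_fin fineK //; exact: probability_le1.
  have pr : p <= fine (mu (B j)) by rewrite -lee_fin fineK.
  by apply: lerXn2r; rewrite ?nnegrE ?subr_ge0 // lerB.
pose Aj (j : 'I_N) : set Omega :=
  if `[< G j >] then \bigcap_(i in [set: 'I_m]) X i @^-1` ~` B j else set0.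
pose A' (k : nat) : set Omega := if insub k is Some j then Aj j else set0.
have mAj j : measurable (Aj j).
  rewrite /Aj; case: asboolP => // _.
  apply: fin_bigcap_measurable; first exact: finite_finset.
  by move=> i _; apply: mXB; exact: measurableC.
have mA' k : measurable (A' k) by rewrite /A'; case: insub.
have PA' (k : 'I_N) : (P (A' k) <= ((1 - p) ^+ m)%:E)%E.
  rewrite /A' valK /Aj; case: asboolP => [Gk|_]; first exact: AjP.
  by rewrite measure0 lee_fin exprn_ge0 // subr_ge0.
have sub : ~` E `<=` \big[setU/set0]_(k < N) A' k.
  move=> w /= nE; rewrite -bigcup_mkord.
  apply: contrapT => H; apply: nE => j Gj; apply: contrapT => H2; apply: H.
  exists (val j) => //=; rewrite /A' valK /Aj; case: asboolP => // _ i _ /= XB.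
  by apply: H2; exists i.
have hC : (P (~` E) <= delta%:E)%E.
  apply: le_trans (le_measure _ _ _ sub) _.
  - by rewrite inE; exact: measurableC.
  - by rewrite inE; exact: bigsetU_measurable.
  apply: le_trans (Boole_inequality _ _) _ => //.
  apply: (@le_trans _ _ (\sum_(k < N) ((1 - p) ^+ m)%:E)%E); first by apply: lee_sum => k _; exact: PA'.
  by rewrite sumEFin lee_fin sumr_const card_ord -mulr_natl.
rewrite -(setCK E) probability_setC; last exact: measurableC.
have finC : P (~` E) \is a fin_num by apply: fin_num_measure; exact: measurableC.
rewrite -(fineK finC) -EFinB lee_fin lerD2l lerN2 -lee_fin fineK //.
Qed.

Theorem theorem1 (R : realType) (p delta : R)
  (hp : 0 < p < 1) (hdelta : 0 < delta < 1) :
  (* Categorical case: Y = T finite, N = #|T|, q = p_{y,t} is the pmf of Y_t;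
     the probability of an event of the i.i.d. sample (y_1..y_m) is the sum
     of the product weights over the samples realizing it. *)
  (forall (T : finType) (q : T -> R),
     (forall y, 0 <= q y) -> \sum_(y : T) q y = 1 ->
     forall m : nat,
     (#|T|%:R <= m%:R :> R) ->
     ln (delta / #|T|%:R) / ln (1 - p) <= m%:R ->
     1 - delta <=
       \sum_(s : {ffun 'I_m -> T} |
               [set y | p <= q y]%SET \subset [set s i | i : 'I_m]%SET) \prod_(i < m) q (s i))
  /\
  (* gamma-quantized case *)
  (forall (n : nat) (Y : set (n.-tuple R)) (gamma : R),
     linf_bounded Y -> 0 < gamma ->
     forall (N : nat) (c : 'I_N -> n.-tuple R),
     min_linf_cover Y (gamma / 2) c ->
     forall (mu : probability (n.-tuple R) R)
            (d : measure_display) (Omega : measurableType d)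
            (P : probability Omega R) (m : nat) (X : 'I_m -> Omega -> n.-tuple R),
     iid_sample P mu X ->
     (forall i w, Y (X i w)) ->
     (N%:R <= m%:R :> R) ->
     ln (delta / N%:R) / ln (1 - p) <= m%:R ->
     let Rgp := [set y | exists j : 'I_N,
                   linf_ball (c j) (gamma / 2) y /\ (p%:E <= mu (linf_ball (c j) (gamma / 2)))%E] in
     exists E : set Omega, [/\ measurable E,
       E `<=` [set w | Rgp `<=` \bigcup_(i in [set: 'I_m]) linf_ball (X i w) gamma] &
       ((1 - delta)%:E <= P E)%E]).
Proof.
have hp' : 0 <= p <= 1 by case/andP: hp => a b; rewrite ltW // ltW.
split.
  move=> T q q0 q1 m _ hl.
  apply: le_trans (cat_case m hp' q0 q1).
  by rewrite lerD2l lerN2 (key hp hdelta hl).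
move=> n Y gamma _ _ N c _ mu d Omega P m X iid _ _ hl.
exact: (gamma_case gamma c hp' iid (key hp hdelta hl)).
Qed.
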